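(* Let $\mathcal S$ be a finite generating set of $M_n(\mathbb{C})$, i.e. $\mathcal L(\mathcal S)=M_n(\mathbb{C})$. (1) If $l(\mathcal S)\ge n$ and $\mathcal L_1^0(\mathcal S)$ contains an invertible matrix, then $l_0(\mathcal S)=l(\mathcal S)$. (2) If $l(\mathcal S)=2n-2$ and $\mathcal L_2^0(\mathcal S)$ contains an invertible derogatory matrix, then $l_0(\mathcal S)=l(\mathcal S)$.
   Context: For a finite subset $\mathcal S$ of $M_n(\mathbb{F})$: a word of length $m$ in $\mathcal S$ is a product $S_1S_2\cdots S_m$ with each $S_j\in\mathcal S$; the word of length $0$ is the identity $I_n$. $\mathcal L_k(\mathcal S)$ is the linear span of all words of length at most $k$ (including the identity as the word of length $0$), and $\mathcal L(\mathcal S)=\bigcup_k\mathcal L_k(\mathcal S)$. $\mathcal L_k^0(\mathcal S)$ is the linear span of all words of length between $1$ and $k$ (the identity is not automatically included), and $\mathcal L^0(\mathcal S)=\bigcup_k \mathcal L_k^0(\mathcal S)$. The length $l(\mathcal S)$ is the smallest $k$ with $\mathcal L_k(\mathcal S)=\mathcal L_{k+1}(\mathcal S)$; the length $l_0(\mathcal S)$ is the smallest $k$ with $\mathcal L_k^0(\mathcal S)=\mathcal L_{k+1}^0(\mathcal S)$. A matrix is derogatory if its minimal polynomial has degree less than $n$. *)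

(* Defs.v *)
From HB Require Import structures.
From mathcomp Require Import all_boot all_order all_algebra.
Set Implicit Arguments. Unset Strict Implicit. Unset Printing Implicit Defensive.
Import Order.TTheory GRing.Theory Num.Theory.
Local Open Scope ring_scope.

Section Words.
Variables (F : fieldType) (n : nat).

Fixpoint words_exact (S : seq 'M[F]_n) (m : nat) : seq 'M[F]_n :=
  match m with
  | 0 => [:: 1%:M]
  | m'.+1 => [seq A *m W | A <- S, W <- words_exact S m']
  end.

Definition Lk (S : seq 'M[F]_n) (k : nat) : {vspace 'M[F]_n} :=
  <<flatten [seq words_exact S i | i <- iota 0 k.+1]>>%VS.

Definition L0k (S : seq 'M[F]_n) (k : nat) : {vspace 'M[F]_n} :=
  <<flatten [seq words_exact S i | i <- iota 1 k]>>%VS.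

Definition generates (S : seq 'M[F]_n) : Prop :=
  exists k, Lk S k = fullv.

Definition is_length (S : seq 'M[F]_n) (k : nat) : Prop :=
  Lk S k = Lk S k.+1 /\ forall j, (j < k)%N -> Lk S j <> Lk S j.+1.

Definition is_length0 (S : seq 'M[F]_n) (k : nat) : Prop :=
  L0k S k = L0k S k.+1 /\ forall j, (j < k)%N -> L0k S j <> L0k S j.+1.

End Words.

Definition derogatory (F : fieldType) (m : nat) (A : 'M[F]_m.+1) : bool :=
  ((size (mxminpoly A)).-1 < m.+1)%N.

(* Main.v *)
Require Import Defs.
From HB Require Import structures.
From mathcomp Require Import all_boot all_order all_algebra.
From mathcomp Require Import zify.
Import Order.TTheory GRing.Theory Num.Theory.
Local Open Scope ring_scope.
Set Implicit Arguments. Unset Strict Implicit.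

Section Aux.
Variables (F : fieldType) (n : nat) (S : seq 'M[F]_n).

Definition G a m : {vspace 'M[F]_n} :=
  <<flatten [seq words_exact S i | i <- iota a m]>>%VS.

Lemma memG a m i x : (a <= i < a + m)%N -> x \in words_exact S i -> x \in G a m.
Proof.
move=> hi hx; apply: memv_span; apply/flattenP; exists (words_exact S i) => //.
by apply/mapP; exists i; rewrite ?mem_iota.
Qed.

Lemma memGP a m x : x \in flatten [seq words_exact S i | i <- iota a m] ->
  exists2 i, (a <= i < a + m)%N & x \in words_exact S i.
Proof.
by case/flattenP=> s /mapP[i]; rewrite mem_iota => hi -> hx; exists i.
Qed.

Lemma subG a m a' m' : (a <= a')%N -> (a' + m' <= a + m)%N -> (G a' m' <= G a m)%VS.
Proof.
move=> h1 h2; apply/span_subvP=> x /memGP[i /andP[hi1 hi2] hx].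
apply: (memG (i:=i)) => //; apply/andP; split; first exact: leq_trans hi1.
exact: leq_trans hi2 h2.
Qed.

Lemma words_mul i j x y : x \in words_exact S i -> y \in words_exact S j ->
  x *m y \in words_exact S (i + j).
Proof.
elim: i x => [|i IH] x /=.
  by rewrite inE => /eqP -> hy; rewrite mul1mx.
case/allpairsP=> [[A W] [hA hW ->]] hy /=.
rewrite -mulmxA; apply/allpairsP; exists (A, W *m y) => //; split => //.
exact: IH.
Qed.

Lemma mul_span (X Y : seq 'M[F]_n) (U : {vspace 'M[F]_n}) V W :
  V \in <<X>>%VS -> W \in <<Y>>%VS ->
  (forall x y, x \in X -> y \in Y -> x *m y \in U) -> V *m W \in U.
Proof.
move=> hV hW h.
rewrite (coord_span (X := in_tuple X) hV) (coord_span (X := in_tuple Y) hW).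
rewrite mulmx_suml; apply: memv_suml => i _; rewrite -scalemxAl mulmx_sumr.
apply: memvZ; apply: memv_suml => j _; rewrite -scalemxAr; apply: memvZ.
by apply: h; apply/mem_nth/ltn_ord.
Qed.

Lemma mulG a m b k V W : V \in G a m -> W \in G b k ->
  V *m W \in G (a + b) (m + k).-1.
Proof.
move=> hV hW; apply: (mul_span hV hW) => x y /memGP[i hi hx] /memGP[j hj hy].
apply: (memG (i := i + j)); last exact: words_mul.
move: hi hj => /andP[h1 h2] /andP[h3 h4]; apply/andP; split; lia.
Qed.
Lemma stepG a m : G a m = G a m.+1 -> G a m.+1 = G a m.+2.
Proof.
move=> E; apply/eqP; rewrite eqEsubv subG //= ?addnS //.
apply/span_subvP => x /memGP[i hi hx].
case: (ltnP i (a + m.+1)) => h; first by apply: (memG (i := i)) => //; lia.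
move: hx; have ->: i = (a + m).+1 by lia.
move=> hx.
have hx' : x \in [seq A *m W | A <- S, W <- words_exact S (a + m)] := hx.
case/allpairsP: hx' => [[B W] [hB hW ->]] /=.
have -> : B *m W = (B *m 1%:M) *m W by rewrite mulmx1.
have hB1 : B *m 1%:M \in G 1 1.
  apply: (memG (i := 1)) => //.
  change (B *m 1%:M \in [seq A *m W | A <- S, W <- [:: 1%:M]]).
  by apply/allpairsP; exists (B, 1%:M); split => //; rewrite inE.
have hW1 : W \in G a m.
  by rewrite E; apply: (memG (i := a + m)) => //; lia.
apply: (subvP (subG (a := a) (m := m.+1) (a' := (1 + a)) (m' := (1 + m).-1) _ _)); try lia.
exact: mulG.
Qed.

Lemma stabG a j : G a j = G a j.+1 -> forall m, (j <= m)%N -> G a m = G a j.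
Proof.
move=> E.
have P : forall m, (j <= m)%N -> G a m = G a m.+1.
  elim=> [|m IH] hm; first by have <-: j = 0%N by lia.
  case: (ltnP j m.+1) => h; last by have <-: j = m.+1 by lia.
  by apply: stepG; apply: IH; lia.
elim=> [|m IH] hm; first by have ->: j = 0%N by lia.
case: (ltnP j m.+1) => h; last by have ->: j = m.+1 by lia.
by rewrite -P; [apply: IH|]; lia.
Qed.
Lemma keyL l m : is_length S l -> generates S -> 1%:M \in L0k S m -> (m <= l)%N ->
  is_length0 S l.
Proof.
case=> El Hl [k Ek] H1 hm.
change (G 0 l.+1 = G 0 l.+2) in El. change (G 0 k.+1 = fullv) in Ek.
change (is_true (1%:M \in G 1 m)) in H1.
have Full : G 0 l.+1 = fullv.
  case: (leqP k l) => hk.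
    apply/eqP; rewrite eqEsubv subvf /= -Ek; apply: subG; lia.
  by rewrite -Ek; symmetry; apply: (stabG El); lia.
have Full0 : G 1 l = fullv.
  apply/eqP; rewrite eqEsubv subvf /= -Full; apply/span_subvP => x /memGP[i hi hx].
  case: i hi hx => [|i] hi hx.
    move: hx; rewrite /= inE => /eqP ->.
    by apply: (subvP (subG (a := 1) (m := l) (a' := 1) (m' := m) _ _)) => //; lia.
  by apply: (memG (i := i.+1)) => //; lia.
split.
  change (G 1 l = G 1 l.+1); rewrite Full0; apply/eqP; rewrite eqEsubv subvf /=.
  by rewrite -Full0 subG //; lia.
move=> j hj E; change (G 1 j = G 1 j.+1) in E; apply: (Hl j hj).
change (G 0 j.+1 = G 0 j.+2).
have F1 : G 1 j = fullv by rewrite -Full0; symmetry; apply: (stabG E); lia.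
have s1 : G 0 j.+1 = fullv by apply/eqP; rewrite eqEsubv subvf /= -F1 subG //; lia.
have s2 : G 0 j.+2 = fullv by apply/eqP; rewrite eqEsubv subvf /= -F1 subG //; lia.
by rewrite s1 s2.
Qed.
End Aux.

Lemma one_in (F : fieldType) (n : nat) (S : seq 'M[F]_n.+1) (A : 'M[F]_n.+1) c :
  A \in G S 1 c -> (0 < c)%N -> A \in unitmx ->
  1%:M \in G S 1 (c * (size (mxminpoly A)).-1).
Proof.
move=> hA hc hU.
have pw : forall i, A ^+ i.+1 \in G S 1 (c * i.+1).
  elim=> [|i IH]; first by rewrite expr1 muln1.
  rewrite exprS -mulmxE.
  apply: (subvP (@subG _ _ S 1 (c * i.+2) (1 + 1) ((c + c * i.+1).-1) _ _)); try lia.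
  exact: mulG.
set p := mxminpoly A.
have p0 : p`_0 != 0.
  apply/negP => /eqP h0.
  have : eigenvalue A 0 by rewrite eigenvalue_root_min /root horner_coef0 h0.
  rewrite /eigenvalue /eigenspace raddf0 subr0 kermx_eq0 row_free_unit hU //.
have hd : size p = (degree_mxminpoly A).+1 := size_mxminpoly A.
have expand : horner_mx A p = \sum_(i < size p) p`_i *: A ^+ i.
  rewrite -{1}[p]coefK poly_def rmorph_sum; apply: eq_bigr => i _.
  by rewrite -mul_polyC rmorphM /= horner_mx_C rmorphXn /= horner_mx_X -mulmxE mul_scalar_mx.
have := mx_root_minpoly A; rewrite -/p expand hd big_ord_recl /= expr0.
set R := \sum_(i < _) _ => h.
have hR : R = - (p`_0 *: 1%:M).
  by apply/eqP; rewrite -addr_eq0 addrC h.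
have -> : 1%:M = (- (p`_0)^-1) *: R :> 'M[F]_n.+1.
  by rewrite hR scaleNr scalerN opprK scalerA mulVf // scale1r.
apply: memvZ; rewrite /R; apply: memv_suml => i _; apply: memvZ.
apply: (subvP (@subG _ _ S 1 (c * degree_mxminpoly A) 1 (c * i.+1) _ _)) => //.
  have := ltn_ord i; nia.
Qed.

Lemma deg_le (F : fieldType) (n : nat) (A : 'M[F]_n.+1) :
  ((size (mxminpoly A)).-1 <= n.+1)%N.
Proof.
have := dvdp_leq (monic_neq0 (char_poly_monic A)) (mxminpoly_dvd_char A).
rewrite size_char_poly; case: (size _) => //= k; lia.
Qed.

Theorem mainTheorem2 (C : numClosedFieldType) (n : nat) (S : seq 'M[C]_n.+1) :
  generates S ->
  (forall l : nat, is_length S l ->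
     (n.+1 <= l)%N ->
     (exists A, A \in L0k S 1 /\ A \in unitmx) ->
     is_length0 S l) /\
  (forall l : nat, is_length S l ->
     l = (2 * n.+1 - 2)%N ->
     (exists A, [/\ A \in L0k S 2, A \in unitmx & derogatory A]) ->
     is_length0 S l).
Proof.
move=> gen; split.
  move=> l hl hn [A [hA hU]].
  have hA' : A \in G S 1 1 := hA.
  have h1 := one_in hA' (erefl true) hU.
  apply: (@keyL _ _ S l _ hl gen h1).
  have := deg_le A; move: (_.-1) => d; lia.
move=> l hl hl2 [A [hA hU hD]].
have hA' : A \in G S 1 2 := hA.
have h1 := one_in hA' (erefl true) hU.
apply: (@keyL _ _ S l _ hl gen h1).
move: hD; rewrite /derogatory hl2; move: (_.-1) => d; lia.
Qed.
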